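(* Consider the parallel multiple access channel power allocation game with $K$ users and $A$ nodes, as described in the context, with random channel gains. If $p\in\Delta$ is a Nash equilibrium, then almost surely $\sum_{k\in\mathcal{K}}\bigl(|\mathrm{supp}(p_k)|-1\bigr)\le A-1$; that is, there are at most $A-1$ instances of waterfilling (an instance being an edge of a multigraph representing $p$, i.e. a pair of nodes both employed by the same user, with one of them the user's hub).
   Context: Setting: users $\mathcal{K}=\{1,\dots,K\}$, nodes $\mathcal{A}=\{1,\dots,A\}$. User $k$ has maximum power $P_k>0$ and strategy set $\Delta_k=\{p_k\in\mathbb{R}^{\mathcal{A}}: p_{k\alpha}\ge 0,\ \sum_\alpha p_{k\alpha}=P_k\}$; $\Delta=\prod_k\Delta_k$. Payoffs: $u_k(p)=\sum_{\alpha} b_\alpha\log\bigl(1+\frac{g_{k\alpha}p_{k\alpha}}{\sigma_\alpha^2+\sum_{\ell\neq k}g_{\ell\alpha}p_{\ell\alpha}}\bigr)$ with constants $b_\alpha>0$, $\sigma_\alpha^2>0$ and random channel gains $g_{k\alpha}>0$ drawn from a continuous (nonatomic) probability distribution on the positive reals; ''almost surely'' refers to their law. $q\in\Delta$ is a Nash equilibrium if $u_k(q)\ge u_k(q_{-k};q_k')$ for all $k$ and $q_k'\in\Delta_k$. $\mathrm{supp}(p_k)=\{\alpha:p_{k\alpha}>0\}$. A multigraph on vertex set $\mathcal{A}$ represents $p$ if for each user $k$ one chooses a hub $\alpha\in\mathrm{supp}(p_k)$ and adds an edge from $\alpha$ to each $\beta\in\mathrm{supp}(p_k)\setminus\{\alpha\}$.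 *)

(* Defs.v *)
From HB Require Import structures.
From mathcomp Require Import all_boot all_order all_algebra.
From mathcomp Require Import all_classical all_reals all_analysis.
Set Implicit Arguments. Unset Strict Implicit. Unset Printing Implicit Defensive.
Import Order.TTheory GRing.Theory Num.Theory.
Local Open Scope ring_scope.

(* A power profile: p k a = power user k puts on node a. *)
Definition profile (R : realType) (K A : nat) := 'I_K -> 'I_A -> R.

Definition in_Delta_k (R : realType) (A : nat) (Pk : R) (q : 'I_A -> R) : Prop :=
  (forall a, 0 <= q a) /\ \sum_(a < A) q a = Pk.

Definition in_Delta (R : realType) (K A : nat) (P : 'I_K -> R) (p : profile R K A) : Prop :=
  forall k, in_Delta_k (P k) (p k).

Definition payoff (R : realType) (K A : nat) (b sigma2 : 'I_A -> R)
    (g : 'I_K -> 'I_A -> R) (p : profile R K A) (k : 'I_K) : R :=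
  \sum_(a < A) b a * ln (1 + g k a * p k a /
                           (sigma2 a + \sum_(l < K | l != k) g l a * p l a)).

Definition deviate (R : realType) (K A : nat) (p : profile R K A) (k : 'I_K)
    (q : 'I_A -> R) : profile R K A :=
  fun l => if l == k then q else p l.

Definition nash_eq (R : realType) (K A : nat) (P : 'I_K -> R) (b sigma2 : 'I_A -> R)
    (g : 'I_K -> 'I_A -> R) (p : profile R K A) : Prop :=
  in_Delta P p /\
  forall k (q : 'I_A -> R), in_Delta_k (P k) q ->
    payoff b sigma2 g (deviate p k q) k <= payoff b sigma2 g p k.

Definition supp (R : realType) (A : nat) (q : 'I_A -> R) : {set 'I_A} :=
  [set a | 0 < q a].

(* Main.v *)
Require Import Defs.
From HB Require Import structures.
From mathcomp Require Import all_boot all_order all_algebra.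
From mathcomp Require Import all_classical all_reals all_analysis.
Import Order.TTheory GRing.Theory Num.Theory.
Local Open Scope ring_scope.
Set Implicit Arguments. Unset Strict Implicit. Unset Printing Implicit Defensive.
From mathcomp Require Import ring lra zify.

Lemma ln_sub_ge (R : realType) (u v : R) : 0 < u -> 0 < v -> 1 - v / u <= ln u - ln v.
Proof.
move=> hu hv.
have h := expR_ge1Dx (ln (v / u)).
rewrite lnK in h; last by rewrite posrE divr_gt0.
rewrite ln_div ?posrE // in h. lra.
Qed.

Lemma small_eps (R : realType) (x C p : R) : 0 <= C -> 0 < p ->
  (forall e, 0 < e -> e <= p -> x <= e * C) -> x <= 0.
Proof.
move=> hC hp H; rewrite leNgt; apply/negP => hx.
pose e := Num.min p (x / (2 * (C + 1))).
have he : 0 < e by rewrite lt_min hp /= divr_gt0 //; lra.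
have hep : e <= p by rewrite ge_min lexx.
have hex : e <= x / (2 * (C + 1)) by rewrite ge_min lexx orbT.
have := H e he hep.
have : e * C <= x / (2 * (C + 1)) * C by rewrite ler_wpM2r.
have : x / (2 * (C + 1)) * C < x.
  rewrite mulrAC ltr_pdivrMr; last lra.
  nra.
lra.
Qed.

Section Nash.
Variables (R : realType) (K A : nat) (P : 'I_K -> R) (b s : 'I_A -> R)
  (g : 'I_K -> 'I_A -> R) (p : profile R K A).
Hypotheses (hb : forall a, 0 < b a) (hs : forall a, 0 < s a)
  (hg : forall k a, 0 < g k a) (hne : nash_eq P b s g p).

Definition W a := s a + \sum_(l < K) g l a * p l a.

Lemma p_ge0 k a : 0 <= p k a.
Proof. by case: hne => /(_ k) [+ _] _; apply. Qed.

Lemma two_point_sum (F G : 'I_A -> R) a a' : a != a' ->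
  (forall x, x != a -> x != a' -> F x = G x) ->
  \sum_x F x - \sum_x G x = (F a - G a) + (F a' - G a').
Proof.
move=> haa H.
rewrite [\sum_x F x](bigD1 a) //= [\sum_x G x](bigD1 a) //=.
rewrite [\sum_(i | i != a) F i](bigD1 a') 1?eq_sym //=.
rewrite [\sum_(i | i != a) G i](bigD1 a') 1?eq_sym //=.
rewrite (eq_bigr G); first by lra.
by move=> x /andP [h1 h2]; apply: H.
Qed.

Lemma nash_grad k a a' : p k a' > 0 -> b a * g k a * W a' <= b a' * g k a' * W a.
Proof.
move=> hpa'.
have [<-|haa] := eqVneq a a'; first by rewrite mulrAC.
have haa' : (a' == a) = false by rewrite eq_sym (negbTE haa).
set D := fun x => s x + \sum_(l < K | l != k) g l x * p l x.
have hD x : 0 < D x.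
  rewrite /D; apply: ltr_wpDr; last exact: hs.
  by apply: sumr_ge0 => l _; apply: mulr_ge0; [exact: ltW | exact: p_ge0].
have hW x : W x = D x + g k x * p k x.
  by rewrite /W /D (bigD1 k) //=; lra.
have key : forall e, 0 < e -> e <= p k a' ->
    b a * g k a * (W a' - g k a' * e) <= b a' * g k a' * (W a + g k a * e).
  move=> e he hep.
  pose q x := if x == a then p k a + e else if x == a' then p k a' - e else p k x.
  have hq : in_Delta_k (P k) q.
    case: hne => /(_ k) [h0 hsum] _; split.
      move=> x; rewrite /q; case: ifP => _; first by have := p_ge0 k a; lra.
      case: ifP => _; first lra. exact: p_ge0.
    rewrite -hsum; apply/eqP; rewrite -subr_eq0; apply/eqP.
    rewrite (@two_point_sum q (p k) _ _ haa).
      by rewrite /q eqxx haa' eqxx; lra.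
    by move=> x h1 h2; rewrite /q (negbTE h1) (negbTE h2).
  have hN := (proj2 hne) k q hq.
  have hpay : forall r, payoff b s g (deviate p k r) k =
      \sum_x b x * ln (1 + g k x * r x / D x).
    move=> r; rewrite /payoff; apply: eq_bigr => x _.
    rewrite /deviate eqxx /D; congr (_ * ln (1 + _ / (_ + _))).
    by apply: eq_bigr => l hl; rewrite (negbTE hl).
  have hdev : deviate p k (p k) = p.
    by apply: funext => l; rewrite /deviate; case: eqP => // ->.
  have hp0 : payoff b s g p k = \sum_x b x * ln (1 + g k x * p k x / D x).
    by rewrite -{1}hdev hpay.
  move: hN; rewrite hpay hp0 -subr_le0.
  rewrite (@two_point_sum (fun x => b x * ln (1 + g k x * q x / D x))
                         (fun x => b x * ln (1 + g k x * p k x / D x)) _ _ haa); last first.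
    by move=> x h1 h2; rewrite /q (negbTE h1) (negbTE h2).
  rewrite /q eqxx haa' eqxx.
  have hpa := p_ge0 k a.
  have hga := hg k a. have hga' := hg k a'. have hba := hb a. have hba' := hb a'.
  have hDa := hD a. have hDa' := hD a'.
  set u1 := 1 + g k a * (p k a + e) / D a.
  set v1 := 1 + g k a * p k a / D a.
  set u2 := 1 + g k a' * (p k a' - e) / D a'.
  set v2 := 1 + g k a' * p k a' / D a'.
  have hv1 : 0 < v1 by rewrite /v1; apply: ltr_wpDr => //; apply: divr_ge0 => //; nra.
  have hu1 : 0 < u1 by rewrite /u1; apply: ltr_wpDr => //; apply: divr_ge0 => //; nra.
  have hv2 : 0 < v2 by rewrite /v2; apply: ltr_wpDr => //; apply: divr_ge0 => //; nra.
  have hu2 : 0 < u2 by rewrite /u2; apply: ltr_wpDr => //; apply: divr_ge0 => //; nra.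
  have i1 := ln_sub_ge hu1 hv1. have i2 := ln_sub_ge hu2 hv2.
  have e1 : 1 - v1 / u1 = g k a * e / (W a + g k a * e).
    rewrite /u1 /v1 hW; field.
    by apply/andP; split; rewrite gt_eqF //; nra.
  have e2 : 1 - v2 / u2 = - (g k a' * e / (W a' - g k a' * e)).
    rewrite /u2 /v2 hW; field.
    by apply/andP; split; rewrite gt_eqF //; nra.
  rewrite e1 in i1; rewrite e2 in i2.
  move=> hle.
  have h1 : b a * (g k a * e / (W a + g k a * e)) <= b a * (ln u1 - ln v1) by rewrite ler_pM2l.
  have h2 : b a' * (- (g k a' * e / (W a' - g k a' * e))) <= b a' * (ln u2 - ln v2) by rewrite ler_pM2l.
  have hWa : 0 < W a + g k a * e by rewrite hW; nra.
  have hWa' : 0 < W a' - g k a' * e by rewrite hW; nra.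
  have : b a * (g k a * e / (W a + g k a * e)) <= b a' * (g k a' * e / (W a' - g k a' * e)) by lra.
  set X := W a + g k a * e; set Y := W a' - g k a' * e.
  move=> hh.
  have hXY : 0 <= X * Y by apply: mulr_ge0; apply: ltW.
  have := ler_wpM2r hXY hh.
  have E1 : b a * (g k a * e / X) * (X * Y) = (b a * g k a * Y) * e.
    by field; rewrite gt_eqF.
  have E2 : b a' * (g k a' * e / Y) * (X * Y) = (b a' * g k a' * X) * e.
    by field; rewrite gt_eqF.
  by rewrite E1 E2 ler_pM2r.
have := @small_eps R (b a * g k a * W a' - b a' * g k a' * W a)
  (b a * g k a * g k a' + b a' * g k a' * g k a) (p k a').
have hga := hg k a. have hga' := hg k a'. have hba := hb a. have hba' := hb a'.
move=> /(_ _ hpa') H.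
have : b a * g k a * W a' - b a' * g k a' * W a <= 0.
  apply: H; first by rewrite addr_ge0 // !mulr_ge0 // ltW.
  by move=> e he hep; have := key e he hep; nra.
lra.
Qed.
End Nash.

Lemma nash_log (R : realType) (K A : nat) (P : 'I_K -> R) (b s : 'I_A -> R)
  (g : 'I_K -> 'I_A -> R) (p : profile R K A) :
  (forall a, 0 < b a) -> (forall a, 0 < s a) -> (forall k a, 0 < g k a) ->
  nash_eq P b s g p ->
  exists (x : 'I_A -> R) (y : 'I_K -> R),
    forall k a, 0 < p k a -> ln (g k a) = x a + y k.
Proof.
move=> hb hs hg hne.
have hWp a : 0 < W s g p a.
  rewrite /W; apply: ltr_wpDr; last exact: hs.
  by apply: sumr_ge0 => l _; apply: mulr_ge0; [exact: ltW | exact: (p_ge0 hne)].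
exists (fun a => ln (W s g p a / b a)).
exists (fun k => if [pick a | 0 < p k a] is Some h then ln (b h * g k h / W s g p h) else 0).
move=> k a hpa.
case: pickP => [h hh|]; last by move=> /(_ a); rewrite hpa.
have e1 := nash_grad hb hs hg hne a hh.
have e2 := nash_grad hb hs hg hne h hpa.
have hba := hb a. have hbh := hb h. have hWa := hWp a. have hWh := hWp h.
have hga := hg k a. have hgh := hg k h.
have eq : b h * g k h / W s g p h = b a * g k a / W s g p a.
  have hW1 : W s g p h != 0 by rewrite gt_eqF.
  have hW2 : W s g p a != 0 by rewrite gt_eqF.
  apply/eqP; rewrite (eqr_div _ _ hW1 hW2); apply/eqP.
  by apply: le_anti; rewrite e2 e1.
rewrite eq -lnM ?posrE ?divr_gt0 ?mulr_gt0 //.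
congr ln; field; rewrite !gt_eqF //.
Qed.
Lemma sum_delta (R : realType) (n : nat) (j : 'I_n) (f : 'I_n -> R) :
  \sum_(i < n) (j == i)%:R * f i = f j.
Proof.
rewrite (bigD1 j) //= eqxx mul1r big1 ?addr0 //.
by move=> i hi; rewrite eq_sym (negbTE hi) mul0r.
Qed.

Lemma kernel_vec (R : realType) (K A : nat) (E : {set 'I_K * 'I_A}) :
  (0 < A)%N -> (K + A <= #|E|)%N ->
  exists u : 'rV[R]_#|E|, u != 0 /\ forall (x : 'I_A -> R) (y : 'I_K -> R),
     \sum_(i < #|E|) u 0 i * (x (enum_val i).2 + y (enum_val i).1) = 0.
Proof.
move=> hA hE.
pose M1 : 'M[R]_(#|E|, A) := \matrix_(i, a) ((enum_val i).2 == a)%:R.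
pose M2 : 'M[R]_(#|E|, K) := \matrix_(i, k) ((enum_val i).1 == k)%:R.
pose M := row_mx M1 M2.
pose w : 'cV[R]_(A + K) := col_mx (const_mx 1) (const_mx (-1)).
have Mw : M *m w = 0.
  rewrite mul_row_col; apply/matrixP => i j; rewrite !mxE !ord1.
  rewrite (eq_bigr (fun a => ((enum_val i).2 == a)%:R * 1)); last by move=> a _; rewrite !mxE.
  rewrite (eq_bigr (fun k => ((enum_val i).1 == k)%:R * (-1))) /=; last by move=> k _; rewrite !mxE.
  by rewrite !sum_delta; lra.
have wn0 : w != 0.
  apply/negP => /eqP /matrixP /(_ (lshift K (Ordinal hA)) 0).
  by rewrite /w col_mxEu !mxE => /eqP; rewrite oner_eq0.
have rkM : (\rank M < A + K)%N.
  have h1 : (w^T <= kermx M^T)%MS by apply/sub_kermxP; rewrite -trmx_mul Mw trmx0.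
  have := mxrankS h1; rewrite mxrank_ker !mxrank_tr.
  have hw : (\rank w != 0)%N by rewrite mxrank_eq0.
  lia.
have : kermx M != 0.
  rewrite -mxrank_eq0 mxrank_ker; lia.
move=> /eqP kn0.
have [i hi] : exists i, row i (kermx M) != 0.
  apply: contrapT => H; apply: kn0; apply/row_matrixP => j; rewrite row0.
  by apply/eqP/negPn/negP => hj; apply: H; exists j.
exists (row i (kermx M)); split => // x y.
pose v : 'cV[R]_(A + K) := col_mx (\col_a x a) (\col_k y k).
have Mv : forall j, (M *m v) j 0 = x (enum_val j).2 + y (enum_val j).1.
  move=> j; rewrite mul_row_col !mxE.
  rewrite (eq_bigr (fun a => ((enum_val j).2 == a)%:R * x a)); last by move=> a _; rewrite !mxE.
  rewrite (eq_bigr (fun k => ((enum_val j).1 == k)%:R * y k)) /=; last by move=> k _; rewrite !mxE.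
  by rewrite !sum_delta.
have : (row i (kermx M) *m M *m v) 0 0 = 0.
  by rewrite -row_mul mulmx_ker row0 mul0mx mxE.
rewrite -mulmxA mxE => h; rewrite -[RHS]h; apply: eq_bigr => j _; by rewrite Mv.
Qed.

Section Det.
Variables (R : realType) (K A : nat) (hA : (0 < A)%N).

Lemma ex_u (E : {set 'I_K * 'I_A}) : exists u : 'rV[R]_#|E|,
  (K + A <= #|E|)%N -> u != 0 /\ forall (x : 'I_A -> R) (y : 'I_K -> R),
     \sum_(i < #|E|) u 0 i * (x (enum_val i).2 + y (enum_val i).1) = 0.
Proof.
case: (boolP (K + A <= #|E|)%N) => h.
  by have [u hu] := kernel_vec R hA h; exists u.
by exists 0.
Qed.

Definition uE (E : {set 'I_K * 'I_A}) : 'rV[R]_#|E| := sval (cid (ex_u E)).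

Lemma uEP (E : {set 'I_K * 'I_A}) : (K + A <= #|E|)%N -> uE E != 0 /\ forall (x : 'I_A -> R) (y : 'I_K -> R),
     \sum_(i < #|E|) uE E 0 i * (x (enum_val i).2 + y (enum_val i).1) = 0.
Proof. exact: svalP (cid (ex_u E)). Qed.

Lemma det_bound (P : 'I_K -> R) (b s : 'I_A -> R) (gw : 'I_K -> 'I_A -> R)
  (p : profile R K A) :
  (forall k, 0 < P k) -> (forall a, 0 < b a) -> (forall a, 0 < s a) ->
  (forall k a, 0 < gw k a) ->
  (forall E : {set 'I_K * 'I_A}, (K + A <= #|E|)%N ->
     \sum_(i < #|E|) uE E 0 i * ln (gw (enum_val i).1 (enum_val i).2) != 0) ->
  nash_eq P b s gw p ->
  (\sum_(k < K) (#|supp (p k)| - 1) <= A - 1)%N.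
Proof.
move=> hP hb hs hg hgen hne.
have hsupp k : (0 < #|supp (p k)|)%N.
  apply/card_gt0P; apply: contrapT => H.
  case: hne => /(_ k) [h0 hsum] _.
  have : \sum_(a < A) p k a = 0.
    apply: big1 => a _; apply/eqP; rewrite eq_le h0 andbT leNgt; apply/negP => ha.
    by apply: H; exists a; rewrite inE.
  by rewrite hsum => h; have := hP k; rewrite h ltxx.
pose E := [set e : 'I_K * 'I_A | 0 < p e.1 e.2].
have cardE : #|E| = (\sum_(k < K) #|supp (p k)|)%N.
  apply/esym; transitivity (\sum_(k < K) \sum_(a < A) (if (0 < p k a)%R then 1 else 0))%N.
    apply: eq_bigr => k _; rewrite -sum1_card big_mkcond /=.
    by apply: eq_bigr => a _; rewrite !inE.
  rewrite pair_bigA /= -sum1_card big_mkcond /=.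
  by rewrite [RHS]big_mkcond; apply: eq_bigr => e _; rewrite inE.
have hsplit : (\sum_(k < K) (#|supp (p k)| - 1) + K = \sum_(k < K) #|supp (p k)|)%N.
  transitivity (\sum_(k < K) (#|supp (p k)| - 1 + 1))%N; first by rewrite big_split /= sum1_card card_ord.
  by apply: eq_bigr => k _; rewrite subnK // hsupp.
rewrite leqNgt; apply/negP => hbig.
have hKA : (K + A <= #|E|)%N by rewrite cardE -hsplit; lia.
have [x [y hxy]] := nash_log hb hs hg hne.
have := hgen E hKA; have [_ hu] := uEP hKA.
rewrite -[X in _ != X](hu x y); move/eqP; apply.
apply: eq_bigr => i _; congr (_ * _); rewrite hxy //.
by have := enum_valP i; rewrite inE.
Qed.
End Det.
Local Open Scope classical_set_scope.

Section Part.
Variables (R : realType) (mu : probability R R).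
Hypothesis mu_nonatomic : forall x : R, mu [set y : R | y = x] = 0%E.
Hypothesis mu_pos : mu `]0, +oo[ = 1%E.

Definition Iv (x : R) : set R := `]-oo, x].

Lemma IvE x y : Iv x y <-> y <= x.
Proof. by rewrite /Iv /= in_itv /=. Qed.

Lemma Iv_meas x : measurable (Iv x).
Proof. exact: measurable_itv. Qed.

Lemma Iv_le x y : x <= y -> (mu (Iv x) <= mu (Iv y))%E.
Proof.
move=> xy; apply: le_measure; rewrite ?inE; try exact: Iv_meas.
by move=> z /IvE zx; apply/IvE; apply: le_trans xy.
Qed.

Lemma inc_bound (S : nat -> set R) (U : set R) (t : \bar R) :
  (forall n, measurable (S n)) -> {homo S : n m / (n <= m)%N >-> (n <= m)%O} ->
  \bigcup_n S n = U -> (forall n, (mu (S n) <= t)%E) -> (mu U <= t)%E.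
Proof.
move=> mS hS hU ht.
have mU : measurable (\bigcup_n S n) by exact: bigcupT_measurable.
have h := nondecreasing_cvg_mu (mu := mu) mS mU hS.
rewrite -hU -(cvg_lim _ h) //; apply: lime_le; first exact: (cvgP _ h).
exact: nearW.
Qed.

Lemma dec_bound (S : nat -> set R) (U : set R) (t : \bar R) :
  (forall n, measurable (S n)) -> {homo S : n m / (n <= m)%N >-> (m <= n)%O} ->
  \bigcap_n S n = U -> (forall n, (t <= mu (S n))%E) -> (t <= mu U)%E.
Proof.
move=> mS hS hU ht.
have mU : measurable (\bigcap_n S n) by exact: bigcapT_measurable.
have fin : (mu (S 0%N) < +oo)%E by rewrite (le_lt_trans (probability_le1 _ _)) ?ltry.
have h := nonincreasing_cvg_mu (mu := mu) fin mS mU hS.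
rewrite -hU -(cvg_lim _ h) //; apply: lime_ge; first exact: (cvgP _ h).
exact: nearW.
Qed.

Lemma small_inv (e : R) : 0 < e -> exists n : nat, (n.+1%:R)^-1 < e.
Proof.
move=> he; exists (Num.trunc e^-1).
rewrite invf_plt ?posrE ?ltr0n //; exact: truncnS_gt.
Qed.

Lemma big_nat (x : R) : exists n : nat, x <= n%:R.
Proof. by exists (Num.trunc x).+1; apply: ltW; exact: truncnS_gt. Qed.

Lemma inv_dec : {homo (fun n : nat => (n.+1%:R : R)^-1) : n m / (n <= m)%N >-> m <= n}.
Proof. by move=> n m nm; rewrite lef_pV2 ?posrE ?ltr0n // ler_nat. Qed.

Lemma quantile (t : R) : 0 < t < 1 -> exists q, mu (Iv q) = t%:E.
Proof.
move=> /andP [t0 t1].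
pose Q := [set x | (t%:E <= mu (Iv x))%E].
have Qne : Q !=set0.
  apply: contrapT => H.
  have : (mu setT <= t%:E)%E.
    apply: (@inc_bound (fun n => Iv n%:R)).
    - by move=> n; exact: Iv_meas.
    - move=> n m nm; apply/subsetPset => x /IvE xn; apply/IvE.
      by apply: le_trans xn _; rewrite ler_nat.
    - apply/seteqP; split => x // _.
      by have [n hn] := big_nat x; exists n => //; apply/IvE.
    - move=> n; rewrite leNgt; apply/negP => hn; apply: H.
      by exists n%:R; rewrite /Q /=; apply: ltW.
  by rewrite probability_setT lee_fin; lra.
have [m hm] : exists m : nat, (mu (Iv (- m%:R)) < t%:E)%E.
  apply: contrapT => H.
  have : (t%:E <= mu set0)%E.
    apply: (@dec_bound (fun n => Iv (- n%:R))).
    - by move=> n; exact: Iv_meas.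
    - move=> n k nk; apply/subsetPset => x /IvE xn; apply/IvE.
      by apply: le_trans xn _; rewrite lerN2 ler_nat.
    - apply/seteqP; split => x //= hx.
      have [n hn] := big_nat (- x).
      by have := hx n.+1 I; move/IvE; rewrite -natr1; lra.
    - move=> n; rewrite leNgt; apply/negP => hn; apply: H.
      by exists n.
  by rewrite measure0 lee_fin; lra.
have Qlb : lbound Q (- m%:R).
  move=> x Qx; rewrite leNgt; apply/negP => hx.
  have := Iv_le (ltW hx); rewrite /Q /= in Qx.
  move=> h; have := le_trans Qx h; rewrite leNgt => /negP; apply; exact: hm.
have hlb : has_lbound Q by exists (- m%:R).
pose q := inf Q.
exists q; apply/eqP; rewrite eq_le; apply/andP; split; last first.
  apply: (@dec_bound (fun n => Iv (q + (n.+1%:R)^-1))).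
  - by move=> n; exact: Iv_meas.
  - move=> n k nk; apply/subsetPset => x /IvE xn; apply/IvE.
    by apply: le_trans xn _; rewrite lerD2l; apply: inv_dec.
  - apply/seteqP; split => x /= hx; last first.
      by move=> n _; apply/IvE; move/IvE: hx => hx; apply: ler_wpDr => //; rewrite invr_ge0.
    apply/IvE; rewrite leNgt; apply/negP => xq.
    have [n hn] := @small_inv (x - q) ltac:(by rewrite subr_gt0).
    have := hx n I; move/IvE => hh. move: hn hh. move: (n.+1%:R^-1) => z. clear. move=> hn hh. lra.
  - move=> n.
    have [y Qy yl] := inf_lt Qne (x := q + (n.+1%:R)^-1) ltac:(by rewrite ltrDl invr_gt0 ltr0n).
    by apply: le_trans Qy _; apply: Iv_le; apply: ltW.
have hlt : (mu `]-oo, q[ <= t%:E)%E.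
  apply: (@inc_bound (fun n => Iv (q - (n.+1%:R)^-1))).
  - by move=> n; exact: Iv_meas.
  - move=> n k nk; apply/subsetPset => x /IvE xn; apply/IvE.
    by apply: le_trans xn _; rewrite lerD2l lerN2; apply: inv_dec.
  - apply/seteqP; split => x /=.
      move=> [n _ /IvE hx]; rewrite in_itv /=.
      by apply: le_lt_trans hx _; rewrite gtrDl oppr_lt0 invr_gt0 ltr0n.
    rewrite in_itv /= => xq.
    have [n hn] := @small_inv (q - x) ltac:(by rewrite subr_gt0).
    exists n => //; apply/IvE; move: hn; move: (n.+1%:R^-1) => z; lra.
  - move=> n; rewrite leNgt; apply/negP => hn.
    have : q <= q - (n.+1%:R)^-1 by apply: ge_inf => //; rewrite /Q /=; apply: ltW.
    by rewrite lerDl oppr_ge0 invr_le0 lern0.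
have -> : Iv q = `]-oo, q[ `|` [set y | y = q].
  apply/seteqP; split => x /=.
    move/IvE; rewrite le_eqVlt => /orP [/eqP ->|xq]; first by right.
    by left; rewrite in_itv.
  by move=> [|->]; rewrite /Iv /= !in_itv //= => /ltW.
have m1 : measurable `]-oo, q[ by exact: measurable_itv.
have m2 : measurable [set y : R | y = q].
  by rewrite (_ : [set y | y = q] = [set q]) //; exact: measurable_set1.
have m3 : `]-oo, q[ `&` [set y | y = q] = set0.
  by apply/seteqP; split => x //= [] ; rewrite in_itv /= => h hq; rewrite hq ltxx in h.
rewrite measureU //; move: (mu_nonatomic q) => /= ->; by rewrite adde0.
Qed.

Lemma quant_ex (t : R) : exists q, 0 < t < 1 -> mu (Iv q) = t%:E.
Proof.
case: (boolP (0 < t < 1)) => h; first by have [q hq] := quantile h; exists q.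
by exists 0.
Qed.

Definition qf (t : R) := sval (cid (quant_ex t)).

Lemma qfP t : 0 < t < 1 -> mu (Iv (qf t)) = t%:E.
Proof. exact: svalP (cid (quant_ex t)). Qed.

Lemma Iv0 : mu (Iv 0) = 0%E.
Proof.
have -> : Iv 0 = ~` `]0, +oo[.
  apply/seteqP; split => x /=; rewrite /Iv /= !in_itv /= andbT.
    by move=> h1 h2; rewrite ltNge h1 in h2.
  by rewrite ltNge => /negP /negbNE.
by rewrite probability_setC ?mu_pos ?subee //; exact: measurable_itv.
Qed.

Lemma Iv_lt x y : (mu (Iv x) < mu (Iv y))%E -> x < y.
Proof.
move=> h; rewrite ltNge; apply/negP => yx.
by have := Iv_le yx; rewrite leNgt h.
Qed.

Lemma partition (N : nat) : (0 < N)%N -> exists C : 'I_N -> set R,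
  [/\ (forall i, measurable (C i)), (forall x, exists i, C i x),
      (forall i j x, C i x -> C j x -> i = j) &
      (forall i, (mu (C i) <= (N%:R^-1)%:E)%E)].
Proof.
move=> N0.
pose val (i : nat) : R := (minn i N)%:R / N%:R.
pose cc (i : nat) : R := if i == 0%N then 0 else qf (val i).
pose dd (i : nat) : set R := if (i < N)%N then Iv (cc i) else setT.
have hN : (0 : R) < N%:R by rewrite ltr0n.
have mdd i : measurable (dd i).
  by rewrite /dd; case: ifP => _; [exact: Iv_meas | exact: measurableT].
have hIv i : (i < N)%N -> mu (Iv (cc i)) = (val i)%:E.
  move=> iN; rewrite /cc /val.
  case: eqP => [->|/eqP i0]; first by rewrite Iv0 min0n mul0r.
  rewrite qfP //; apply/andP; split.
    by rewrite divr_gt0 // ltr0n; lia.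
  by rewrite ltr_pdivrMr // mul1r ltr_nat; lia.
have hdd i : mu (dd i) = (val i)%:E.
  rewrite /dd; case: ifP => iN; first exact: hIv.
  rewrite probability_setT /val; have -> : minn i N = N by lia.
  by rewrite divff // gt_eqF.
have val_lt i j : (i < j <= N)%N -> val i < val j.
  move=> hij; rewrite /val ltr_pM2r ?invr_gt0 // ltr_nat; lia.
have ddS i j : (i <= j)%N -> dd i `<=` dd j.
  move=> ij; rewrite {2}/dd; case: ifP => jN; last by [].
  rewrite /dd (_ : (i < N)%N = true); last by lia.
  move: ij; rewrite leq_eqVlt => /orP [/eqP -> //| ij].
  move=> x /IvE hx; apply/IvE; apply: le_trans hx _; apply: ltW.
  apply: Iv_lt; rewrite hIv ?hIv //; last by lia.
  rewrite lte_fin; apply: val_lt; lia.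
have Cin i x : (if i == 0%N then dd 1 else dd i.+1 `\` dd i) x -> dd i.+1 x.
  by case: eqP => [->|_] // [].
pose C (i : 'I_N) : set R := if (i : nat) == 0%N then dd 1 else dd i.+1 `\` dd i.
exists C; split.
- move=> i; rewrite /C; case: ifP => _; first exact: mdd.
  by apply: measurableD; exact: mdd.
- move=> x.
  have ddN : dd N x by rewrite /dd ltnn.
  have exP : exists n, `[< dd n x >] by exists N; apply/asboolP.
  case: (ex_minnP exP) => j /asboolP hj hmin.
  have jN : (j <= N)%N by apply: hmin; apply/asboolP.
  case: (leqP j 1) => j1.
    by exists (Ordinal N0); rewrite /C /=; apply: ddS j1 _ hj.
  have jN' : (j.-1 < N)%N by lia.
  exists (Ordinal jN'); rewrite /C /= (_ : (j.-1 == 0)%N = false); last by lia.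
  rewrite prednK; last by lia.
  split => // hj'; have := hmin j.-1 (introT (asboolP _) hj'); lia.
- have key (i j : 'I_N) x : (i < j)%N -> C i x -> C j x -> False.
    move=> ij /Cin hi; rewrite /C (_ : ((j : nat) == 0)%N = false); last by lia.
    by move=> [_]; apply; apply: ddS hi; lia.
  move=> i j x hi hj; apply: val_inj => /=.
  case: (ltngtP i j) => // ij; first by case: (key _ _ _ ij hi hj).
  by case: (key _ _ _ ij hj hi).
- move=> i; rewrite /C; case: ifP => [/eqP i0|i0].
    rewrite hdd /val; have -> : minn 1 N = 1%N by lia.
    by rewrite mul1r.
  rewrite measureD ?mdd //; last by rewrite (le_lt_trans (probability_le1 _ _)) ?ltry // mdd.
  rewrite setIidr; last by apply: ddS.
  move: (hdd i.+1) (hdd i) => /= -> ->; rewrite -EFinB lee_fin /val; have -> : minn i.+1 N = i.+1 by have := ltn_ord i; lia.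
  have -> : minn i N = i by have := ltn_ord i; lia.
  by rewrite -mulrBl -natrB // subSnn mul1r.
Qed.
End Part.
Section Indep.
Variables (R : realType) (K A : nat) (d : measure_display) (T : measurableType d)
  (Pr : probability T R) (mu : probability R R) (g : 'I_K -> 'I_A -> T -> R).
Hypothesis g_meas : forall k a, measurable_fun setT (g k a).
Hypothesis g_iid : forall B : 'I_K -> 'I_A -> set R,
      (forall k a, measurable (B k a)) ->
      Pr [set w : T | forall k a, B k a (g k a w)]
      = (\prod_(k < K) \prod_(a < A) mu (B k a))%E.

Definition rect (B : 'I_K -> 'I_A -> set R) := [set w : T | forall k a, B k a (g k a w)].

Lemma pre_meas k a (B : set R) : measurable B -> measurable (g k a @^-1` B).
Proof. by move=> mB; rewrite -[_ @^-1` _]setTI; exact: g_meas. Qed.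

Lemma rect_meas B : (forall k a, measurable (B k a)) -> measurable (rect B).
Proof.
move=> mB.
have -> : rect B = \bigcap_(e in [set: 'I_K * 'I_A]) (g e.1 e.2 @^-1` B e.1 e.2).
  apply/seteqP; split => w /=.
    by move=> h [k a] _; exact: h.
  by move=> h k a; exact: (h (k, a) I).
apply: fin_bigcap_measurable; first exact: finite_finset.
by move=> [k a] _; exact: pre_meas.
Qed.

Variables (k0 : 'I_K) (a0 : 'I_A).

Definition Gr : set (set T) := [set S | exists B : 'I_K -> 'I_A -> set R,
  [/\ (forall k a, measurable (B k a)), B k0 a0 = setT & S = rect B]].

Definition upd (B : 'I_K -> 'I_A -> set R) (B0 : set R) :=
  fun k a => if (k == k0) && (a == a0) then B0 else B k a.

Lemma prod_upd (f f' : 'I_K -> 'I_A -> \bar R) :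
  (forall k a, (k != k0) || (a != a0) -> f' k a = f k a) -> f k0 a0 = 1%E ->
  (\prod_(k < K) \prod_(a < A) f' k a = f' k0 a0 * \prod_(k < K) \prod_(a < A) f k a)%E.
Proof.
move=> hff h1.
rewrite [in LHS](bigD1 k0) //= [in RHS](bigD1 k0) //=.
rewrite [in LHS](bigD1 a0) //= [in RHS](bigD1 a0) //= h1 mul1e.
rewrite (eq_bigr (fun a => f k0 a)); last by move=> a ha; rewrite hff // ha orbT.
rewrite [X in (_ * X)%E](eq_bigr (fun k => (\prod_(a < A) f k a)%E)); last first.
  by move=> k hk; apply: eq_bigr => a _; rewrite hff // hk.
by rewrite muleA.
Qed.

Lemma indep (B0 : set R) (mB0 : measurable B0) S : <<s Gr >> S ->
  Pr (g k0 a0 @^-1` B0 `&` S) = (mu B0 * Pr S)%E.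
Proof.
move=> hS.
have mX := pre_meas k0 a0 mB0.
have fin : mu B0 = (fine (mu B0))%:E.
  by rewrite fineK // ge0_fin_numE ?measure_ge0 // (le_lt_trans (probability_le1 _ _)) ?ltry.
have h0 : 0 <= fine (mu B0) by rewrite fine_ge0 // measure_ge0.
pose m1 := mrestr Pr mX.
pose m2 := mscale (NngNum h0) Pr.
have Gm : Gr `<=` measurable by move=> _ [B [mB _ ->]]; exact: rect_meas.
have GT : Gr setT.
  exists (fun _ _ => setT); split => //.
  by apply/seteqP; split.
have E : m1 S = m2 S.
  apply: (@g_sigma_algebra_measure_unique d R T Gr Gm (fun _ => setT) (fun _ => GT)) => //.
- by apply/seteqP; split => // x _; exists 0%N.
- move=> _ _ [B [mB hB ->]] [B' [mB' hB' ->]].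
  exists (fun k a => B k a `&` B' k a); split.
  + by move=> k a; apply: measurableI.
  + by rewrite hB hB' setTI.
  + by apply/seteqP; split => w /=; [move=> [h h'] k a; split|move=> h; split => k a; case: (h k a)].
- move=> _ [B [mB hB ->]]; rewrite /m1 /m2 /mrestr /mscale /=.
  change (Pr (rect B `&` g k0 a0 @^-1` B0) = ((fine (mu B0))%:E * Pr (rect B))%E); rewrite -fin.
  have -> : rect B `&` g k0 a0 @^-1` B0 = rect (upd B B0).
    apply/seteqP; split => w /=.
      move=> [h h0'] k a; rewrite /upd; case: andP => [[/eqP -> /eqP ->]|_] //; exact: h.
    move=> h; split; last by have := h k0 a0; rewrite /upd !eqxx.
    move=> k a; have := h k a; rewrite /upd; case: andP => [[/eqP -> /eqP ->]|//].
    by rewrite hB.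
  rewrite g_iid; last by move=> k a; rewrite /upd; case: andP.
  rewrite g_iid //.
  rewrite (@prod_upd (fun k a => mu (B k a)) (fun k a => mu (upd B B0 k a))) /=.
  + by rewrite /upd !eqxx.
  + by move=> k a h; rewrite /upd; case: andP => // [[/eqP hk /eqP ha]]; move: h; rewrite hk ha !eqxx.
  + by rewrite hB probability_setT.
- move=> _; change (Pr (setT `&` g k0 a0 @^-1` B0) < +oo)%E.
  by rewrite (le_lt_trans (probability_le1 _ _)) ?ltry // setTI.
by move: E; rewrite /m1 /m2 /mrestr /mscale /= setIC -fin.
Qed.

Lemma law (B0 : set R) : measurable B0 -> Pr (g k0 a0 @^-1` B0) = mu B0.
Proof.
move=> mB0.
have GT : Gr setT.
  exists (fun _ _ => setT); split => //.
  by apply/seteqP; split.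
have := indep mB0 (sub_sigma_algebra GT).
by rewrite setIT probability_setT mule1.
Qed.
End Indep.

Lemma sub_bigsetU (T : Type) (I : finType) (F : I -> set T) (i : I) :
  F i `<=` \big[setU/set0]_(j : I) F j.
Proof. by rewrite (bigD1 i) //= => x hx; left. Qed.

Section Null.
Variables (R : realType) (K A : nat) (d : measure_display) (T : measurableType d)
  (Pr : probability T R) (mu : probability R R) (g : 'I_K -> 'I_A -> T -> R).
Hypothesis mu_nonatomic : forall x : R, mu [set y : R | y = x] = 0%E.
Hypothesis mu_pos : mu `]0, +oo[ = 1%E.
Hypothesis g_meas : forall k a, measurable_fun setT (g k a).
Hypothesis g_iid : forall B : 'I_K -> 'I_A -> set R,
      (forall k a, measurable (B k a)) ->
      Pr [set w : T | forall k a, B k a (g k a w)]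
      = (\prod_(k < K) \prod_(a < A) mu (B k a))%E.

Lemma null_eq (k0 : 'I_K) (a0 : 'I_A) (Z : T -> R) :
  (forall I, measurable I -> <<s Gr g k0 a0 >> (Z @^-1` I)) ->
  Pr [set w | g k0 a0 w = Z w] = 0%E.
Proof.
move=> hZ.
have Gm : Gr g k0 a0 `<=` measurable by move=> _ [B [mB _ ->]]; exact: rect_meas.
have sGm : <<s Gr g k0 a0 >> `<=` measurable.
  exact: smallest_sub (@sigma_algebra_measurable _ T) Gm.
have mZ : measurable_fun setT Z.
  by move=> _ I mI; rewrite setTI; apply: sGm; exact: hZ.
have mX := g_meas k0 a0.
pose D := [set w | g k0 a0 w = Z w].
have mD : measurable D.
  have := measurable_realfun.measurable_fun_eqr mX mZ measurableT (Y := [set true]) I.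
  rewrite setTI; congr measurable; apply/seteqP; split => w /=.
    by move/eqP.
  by move=> ->; rewrite eqxx.
have bound : forall N : nat, (0 < N)%N -> (Pr D <= (N%:R^-1)%:E)%E.
  move=> N N0.
  have [C [mC cov disj small]] := partition mu_nonatomic mu_pos N0.
  pose F (i : 'I_N) := g k0 a0 @^-1` C i `&` Z @^-1` C i.
  have mF i : measurable (F i).
    by apply: measurableI; [exact: pre_meas | apply: sGm; exact: hZ].
  have tF : trivIset [set: 'I_N] F.
    by move=> i j _ _ [w [[hi _] [hj _]]]; exact: disj hi hj.
  have mU : measurable (\big[setU/set0]_(i < N) F i) by exact: bigsetU_measurable.
  have DU : D `<=` \big[setU/set0]_(i < N) F i.
    move=> w Dw; have [i hi] := cov (g k0 a0 w).
    by apply: (@sub_bigsetU _ _ F i); split => //; rewrite /= -Dw.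
  apply: le_trans (le_measure _ _ _ DU) _; rewrite ?inE //.
  rewrite measure_semi_additive_ord //.
  have -> : (\sum_(i < N) Pr (F i) = \sum_(i < N) (mu (C i) * Pr (Z @^-1` C i)))%E.
    apply: eq_bigr => i _; rewrite /F; apply: indep => //; exact: hZ.
  apply: le_trans (_ : (\sum_(i < N) ((N%:R^-1)%:E * Pr (Z @^-1` C i)) <= _)%E).
    apply: lee_sum => i _; apply: lee_wpmul2r => //; exact: measure_ge0.
  rewrite -ge0_sume_distrr; last by move=> i _; exact: measure_ge0.
  have mZC i : measurable (Z @^-1` C i) by apply: sGm; exact: hZ.
  rewrite -measure_semi_additive_ord //; last first.
    - exact: bigsetU_measurable.
    - by move=> i j _ _ [w [hi hj]]; exact: disj hi hj.
  rewrite -[X in (_ <= X)%E]mule1; apply: lee_wpmul2l; first by rewrite lee_fin invr_ge0.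
  apply: probability_le1; exact: bigsetU_measurable.
have : (0 <= Pr D)%E by exact: measure_ge0.
have fin : Pr D = (fine (Pr D))%:E.
  by rewrite fineK // ge0_fin_numE ?measure_ge0 // (le_lt_trans (probability_le1 _ _)) ?ltry.
rewrite -/D fin lee_fin => h0.
congr (_%:E); apply/eqP; rewrite eq_le h0 andbT leNgt; apply/negP => hpos.
have [n hn] := small_inv hpos.
have := bound n.+1 (ltn0Sn n); rewrite fin lee_fin => h.
by have := lt_le_trans hn h; rewrite ltxx.
Qed.

Lemma null_lin (J : finType) (h : J -> 'I_K * 'I_A) (c : J -> R) (j0 : J) :
  injective h -> c j0 != 0 ->
  Pr.-negligible [set w | \sum_j c j * ln (g (h j).1 (h j).2 w) = 0].
Proof.
move=> hinj cj0.
pose kk := (h j0).1. pose aa := (h j0).2.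
pose GT := g_sigma_algebraType (Gr g kk aa).
pose Z (w : T) := expR ((- \sum_(j | j != j0) c j * ln (g (h j).1 (h j).2 w)) / c j0).
have mgj j : j != j0 -> measurable_fun (setT : set GT) (fun w : GT => g (h j).1 (h j).2 w).
  move=> jj0 _ I mI; rewrite setTI.
  apply: sub_sigma_algebra.
  exists (fun k a => if (k, a) == h j then I else setT); split.
  - by move=> k a; case: ifP.
  - have -> : ((kk, aa) == h j) = false.
      apply/negP => /eqP e; move/negP: jj0; apply; apply/eqP; apply: hinj.
      by rewrite -e /kk /aa -surjective_pairing.
    by [].
  - apply/seteqP; split => w /=.
      move=> hw k a; case: eqP => // e; by move: hw; rewrite -e.
    by move=> /(_ (h j).1 (h j).2); rewrite -surjective_pairing eqxx.
have mZ : measurable_fun (setT : set GT) Z.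
  apply: measurableT_comp; first exact: measurable_realfun.measurable_expR.
  apply: measurable_realfun.measurable_funM; last exact: measurable_cst.
  apply: measurableT_comp; first exact: measurable_realfun.oppr_measurable.
  rewrite [X in measurable_fun _ X](_ : _ = fun w : GT => \sum_(j <- index_enum J)
     (if j != j0 then c j * ln (g (h j).1 (h j).2 w) else 0)); last first.
    by apply: funext => w; rewrite big_mkcond.
  apply: (@measurable_sum _ GT R setT J (index_enum J) (fun j w => if j != j0 then c j * ln (g (h j).1 (h j).2 w) else 0)) => j.
  case hj: (j != j0); last exact: measurable_cst.
  apply: measurable_realfun.measurable_funM; first exact: measurable_cst.
  by apply: measurableT_comp; [exact: measurable_realfun.measurable_ln | exact: mgj].
have hZ : forall I, measurable I -> <<s Gr g kk aa >> (Z @^-1` I).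
  by move=> I mI; have := mZ measurableT I mI; rewrite setTI.
have n1 : Pr.-negligible [set w | g kk aa w = Z w].
  apply/negligibleP; last exact: null_eq.
  have Gm : Gr g kk aa `<=` measurable by move=> _ [B [mB _ ->]]; exact: rect_meas.
  have sGm : <<s Gr g kk aa >> `<=` measurable.
    exact: smallest_sub (@sigma_algebra_measurable _ T) Gm.
  have mZ' : measurable_fun setT Z.
    by move=> _ I mI; rewrite setTI; apply: sGm; exact: hZ.
  have := measurable_realfun.measurable_fun_eqr (g_meas kk aa) mZ' measurableT (Y := [set true]) I.
  rewrite setTI; congr measurable; apply/seteqP; split => w /=.
    by move/eqP.
  by move=> ->; rewrite eqxx.
have n2 : Pr.-negligible (g kk aa @^-1` Iv 0).
  apply/negligibleP; first exact: pre_meas (Iv_meas 0).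
  by move: (law g_meas g_iid kk aa (Iv_meas 0)) => /= ->; exact: Iv0.
apply: negligibleS (negligibleU n1 n2) => w /= hw.
case: (leP (g kk aa w) 0) => hX; first by right; apply/IvE.
left; rewrite /Z.
move: hw; rewrite (bigD1 j0) //= => hw.
have -> : (- \sum_(j | j != j0) c j * ln (g (h j).1 (h j).2 w)) / c j0 = ln (g kk aa w).
  have -> : - \sum_(j | j != j0) c j * ln (g (h j).1 (h j).2 w) = c j0 * ln (g kk aa w).
    by rewrite -/kk -/aa in hw; lra.
  by rewrite mulrC mulKf.
by rewrite lnK // posrE.
Qed.
End Null.

Lemma negligible_big (R : realType) d (T : measurableType d) (Pr : probability T R)
  (I : finType) (F : I -> set T) :
  (forall i, Pr.-negligible (F i)) -> Pr.-negligible (\big[setU/set0]_(i : I) F i).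
Proof.
move=> hF; apply: (big_ind (fun S => Pr.-negligible S)).
- by exists set0; split => //; rewrite measure0.
- by move=> S1 S2; exact: negligibleU.
- by move=> i _; exact: hF.
Qed.

Definition badE (R : realType) (K A : nat) (hA : (0 < A)%N) d (T : measurableType d)
  (g : 'I_K -> 'I_A -> T -> R) (E : {set 'I_K * 'I_A}) : set T :=
  if (K + A <= #|E|)%N then
    [set w | \sum_(i < #|E|) uE R hA E 0 i * ln (g (enum_val i).1 (enum_val i).2 w) = 0]
  else set0.

Definition badP (R : realType) (K A : nat) d (T : measurableType d)
  (g : 'I_K -> 'I_A -> T -> R) (e : 'I_K * 'I_A) : set T := g e.1 e.2 @^-1` Iv 0.

Local Close Scope classical_set_scope.
Unset Implicit Arguments.

Theorem corollary1 (R : realType) (K A : nat) (hA : (0 < A)%N)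
  (P : 'I_K -> R) (hP : forall k, 0 < P k)
  (b sigma2 : 'I_A -> R) (hb : forall a, 0 < b a) (hs : forall a, 0 < sigma2 a)
  (d : measure_display) (T : measurableType d) (Pr : probability T R)
  (mu : probability R R)
  (mu_nonatomic : forall x : R, mu [set y : R | y = x]%classic = 0%E)
  (mu_pos : mu `]0, +oo[%classic = 1%E)
  (g : 'I_K -> 'I_A -> T -> R)
  (g_meas : forall k a, measurable_fun setT (g k a))
  (g_iid : forall B : 'I_K -> 'I_A -> set R,
      (forall k a, measurable (B k a)) ->
      Pr [set w : T | forall k a, B k a (g k a w)]%classic
      = (\prod_(k < K) \prod_(a < A) mu (B k a))%E) :
  {ae Pr, forall w, forall p : profile R K A,
      nash_eq P b sigma2 (fun k a => g k a w) p ->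
      (\sum_(k < K) (#|supp (p k)| - 1) <= A - 1)%N}.
Proof.
pose BadE := badE hA g.
pose Bad := setU (\big[setU/set0]_(E : {set 'I_K * 'I_A}) BadE E)
            (\big[setU/set0]_(e : 'I_K * 'I_A) badP g e).
have nBad : Pr.-negligible Bad.
  apply: negligibleU; apply: negligible_big.
    move=> E; rewrite /BadE /badE; case: ifP => hE; last by exists set0; split => //; rewrite measure0.
    have [hu _] := uEP R hA hE.
    have [i0 hi0] : exists i, uE R hA E 0 i != 0.
      apply: contrapT => H; move/negP: hu; apply; apply/eqP/matrixP => i j.
      rewrite ord1 mxE; apply/eqP; apply/negPn/negP => hj; apply: H; by exists j.
    exact: (null_lin mu_nonatomic mu_pos g_meas g_iid (h := enum_val) (c := fun i => uE R hA E 0 i) enum_val_inj hi0).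
  move=> [k a]; rewrite /badP; apply/negligibleP; first exact: pre_meas (Iv_meas 0).
  by move: (law g_meas g_iid k a (Iv_meas 0)) => /= ->; exact: Iv0.
apply: negligibleS nBad => w /= hw.
apply: contrapT => hnB; apply: hw => p hne.
apply: (det_bound (hA := hA) hP hb hs _ _ hne).
- move=> k a; rewrite ltNge; apply/negP => hle; apply: hnB; right.
  by apply: (@sub_bigsetU _ _ (badP g) (k, a)); rewrite /badP /=; apply/IvE.
- move=> E hE; apply/eqP => h0; apply: hnB; left.
  apply: (@sub_bigsetU _ _ BadE E); rewrite /BadE /badE hE; exact: h0.
Qed.
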